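(* Let $\epsilon\in(0,1/2)$, $\eta\in(\epsilon,1-\epsilon)^{2p}$, $\xi_1,\omega_1,\xi_2,\omega_2\in(\epsilon,1-\epsilon)$ with $\xi_1\omega_1=\xi_2\omega_2$, and $\pi$ an everywhere positive probability mass function on $\{0,1\}^p$. Then $p^{\mathrm{ARN}}_{(\xi_1\eta,\omega_1)}(\gamma,\gamma')=p^{\mathrm{ARN}}_{(\xi_2\eta,\omega_2)}(\gamma,\gamma')$ for all $\gamma,\gamma'\in\{0,1\}^p$.
   Context: $\eta=(A,D)$, $c\eta=(cA,cD)$. Neighbourhood indicator distribution: $p^{\mathrm{RN}}_{\xi\eta}(k\mid\gamma)=\prod_j p_j(k_j\mid\gamma_j)$ with $p_j(1\mid0)=\xi A_j$, $p_j(0\mid0)=1-\xi A_j$, $p_j(1\mid1)=\xi D_j$, $p_j(0\mid1)=1-\xi D_j$. $N(\gamma,k)=\{\gamma^*:\gamma^*_j=\gamma_j\ \forall j\text{ with }k_j=0\}$, $p_k=\sum_jk_j$, $d_H$ Hamming distance, $q^{\mathrm{THIN}}_{\omega,k}(\gamma,\gamma')=\omega^{d_H(\gamma,\gamma')}(1-\omega)^{p_k-d_H(\gamma,\gamma')}\mathbb{I}\{\gamma'\in N(\gamma,k)\}$. ARN acceptance $\alpha^{\mathrm{ARN}}_{(\xi\eta,\omega),k}(\gamma,\gamma')=\min\{1,\frac{\pi(\gamma')p^{\mathrm{RN}}_{\xi\eta}(k\mid\gamma')q^{\mathrm{THIN}}_{\omega,k}(\gamma',\gamma)}{\pi(\gamma)p^{\mathrm{RN}}_{\xi\eta}(k\mid\gamma)q^{\mathrm{THIN}}_{\omega,k}(\gamma,\gamma')}\}$;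 ARN kernel for $\gamma'\ne\gamma$: $p^{\mathrm{ARN}}_{(\xi\eta,\omega)}(\gamma,\gamma')=\sum_kp^{\mathrm{RN}}_{\xi\eta}(k\mid\gamma)q^{\mathrm{THIN}}_{\omega,k}(\gamma,\gamma')\alpha^{\mathrm{ARN}}_{(\xi\eta,\omega),k}(\gamma,\gamma')$, and $p^{\mathrm{ARN}}(\gamma,\gamma)=1-\sum_{\gamma'\ne\gamma}p^{\mathrm{ARN}}(\gamma,\gamma')$. *)

(* Defs.v *)
From mathcomp Require Import all_boot all_order all_algebra.
From mathcomp Require Import reals.
Set Implicit Arguments. Unset Strict Implicit. Unset Printing Implicit Defensive.
Import Order.TTheory GRing.Theory Num.Theory.
Local Open Scope ring_scope.

(* Model space {0,1}^p as {ffun 'I_p -> bool}; neighbourhood indicators k likewise. *)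
Definition state (p : nat) := {ffun 'I_p -> bool}.

Section ARN.
Variables (R : realType) (p : nat).

Definition dH (g g' : state p) : nat := #|[set j | g j != g' j]|.
Definition pk (k : state p) : nat := #|[set j | k j]|.
Definition inN (g : state p) (k : state p) (g' : state p) : bool :=
  [forall j, ~~ k j ==> (g' j == g j)].

(* p_j(k_j | gamma_j) with scaled parameters (xi*A, xi*D) *)
Definition pj (xi : R) (A D : 'I_p -> R) (j : 'I_p) (kj gj : bool) : R :=
  let a := if gj then xi * D j else xi * A j in
  if kj then a else 1 - a.

Definition pRN (xi : R) (A D : 'I_p -> R) (k g : state p) : R :=
  \prod_j pj xi A D j (k j) (g j).

Definition qTHIN (om : R) (k g g' : state p) : R :=
  if inN g k g' then om ^+ dH g g' * (1 - om) ^+ (pk k - dH g g') else 0.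

Definition alphaARN (pi : state p -> R) (xi : R) (A D : 'I_p -> R) (om : R)
    (k g g' : state p) : R :=
  Num.min 1 ((pi g' * pRN xi A D k g' * qTHIN om k g' g) /
             (pi g * pRN xi A D k g * qTHIN om k g g')).

Definition pARN_off (pi : state p -> R) (xi : R) (A D : 'I_p -> R) (om : R)
    (g g' : state p) : R :=
  \sum_k pRN xi A D k g * qTHIN om k g g' * alphaARN pi xi A D om k g g'.

Definition pARN (pi : state p -> R) (xi : R) (A D : 'I_p -> R) (om : R)
    (g g' : state p) : R :=
  if g' != g then pARN_off pi xi A D om g g'
  else 1 - \sum_(h | h != g) pARN_off pi xi A D om g h.

End ARN.

(* Main.v *)
Require Import Defs.
From mathcomp Require Import all_boot all_order all_algebra.
From mathcomp Require Import reals.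
From mathcomp Require Import ring lra.
Import Order.TTheory GRing.Theory Num.Theory.
Local Open Scope ring_scope.

Section Help.
Variables (R : realType) (p : nat) (A D : 'I_p -> R).

Definition w (om : R) (g g' : state p) (j : 'I_p) (b : bool) : R :=
  if g j != g' j then (if b then om else 0) else (if b then 1 - om else 1).

Lemma qTHIN_prod om k g g' :
  qTHIN om k g g' = \prod_j w om g g' j (k j).
Proof.
rewrite /qTHIN; case: ifP => hN.
- have E : forall j, w om g g' j (k j) =
     (if g j != g' j then om else 1) * (if k j && (g j == g' j) then 1 - om else 1).
    move=> j; rewrite /w; move/forallP: hN => /(_ j).
    by case: (k j); case: (g j); case: (g' j) => //= _; rewrite ?mul1r ?mulr1.
  rewrite (eq_bigr _ (fun j _ => E j)) big_split /= -!big_mkcond /=.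
  have P1 : \prod_(j | g j != g' j) om = om ^+ dH g g'.
    rewrite /dH -prodr_const; apply: eq_bigl => j; by rewrite inE.
  have P2 : \prod_(j | k j && (g j == g' j)) (1 - om)
          = (1 - om) ^+ #|[set j | k j && (g j == g' j)]|.
    rewrite -prodr_const; apply: eq_bigl => j; by rewrite inE.
  rewrite P1 P2; congr (_ * _ ^+ _).
  have C := cardsID [set j | g j != g' j] [set j | k j].
  have E1 : [set j | k j] :&: [set j | g j != g' j] = [set j | g j != g' j].
    apply/setP => j; rewrite !inE; move/forallP: hN => /(_ j).
    by case: (k j); case: (g j); case: (g' j).
  have E2 : [set j | k j] :\: [set j | g j != g' j] = [set j | k j && (g j == g' j)].
    apply/setP => j; rewrite !inE.
    by case: (k j); case: (g j); case: (g' j).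
  rewrite E1 E2 in C; rewrite /pk /dH -C; by rewrite addKn.
- move/negbT: hN; rewrite negb_forall => /existsP [j hj].
  rewrite (bigD1 j) //= /w.
  move: hj; case: (k j); case: (g j); case: (g' j) => //= _; by rewrite mul0r.
Qed.

Definition F (xi om : R) (g g' : state p) (j : 'I_p) (b : bool) : R :=
  pj xi A D j b (g j) * w om g g' j b.

Lemma T_prod xi om k g g' :
  pRN xi A D k g * qTHIN om k g g' = \prod_j F xi om g g' j (k j).
Proof. by rewrite qTHIN_prod /pRN -big_split. Qed.

Definition a (g : state p) j := if g j then D j else A j.

Lemma pj_true xi j b : pj xi A D j true b = xi * (if b then D j else A j).
Proof. by rewrite /pj; case: b. Qed.

Definition c (xi : R) (g g' : state p) j :=
  if g j != g' j then pj xi A D j true (g' j) / pj xi A D j true (g j) else 1.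

Lemma w_sym om (g g' : state p) j b : w om g' g j b = w om g g' j b.
Proof. by rewrite /w eq_sym. Qed.

Lemma F_sym xi om (g g' : state p) j b : pj xi A D j true (g j) != 0 ->
  F xi om g' g j b = c xi g g' j * F xi om g g' j b.
Proof.
move=> nz; rewrite /F /c w_sym /w.
case: eqP => [->|/eqP ne] /=; first by rewrite mul1r.
case: b; last by rewrite !mulr0.
by rewrite mulrA divfK.
Qed.

Lemma c_indep xi1 xi2 (g g' : state p) j : xi1 != 0 -> xi2 != 0 ->
  (forall j, 0 < A j) -> (forall j, 0 < D j) ->
  c xi1 g g' j = c xi2 g g' j.
Proof.
move=> h1 h2 hA hD; rewrite /c; case: ifP => // _.
rewrite !pj_true.
have hy : (if g j then D j else A j) != 0.
  by case: (g j); rewrite gt_eqF ?hA ?hD.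
by field; rewrite ?h1 ?h2 ?hy.
Qed.

Lemma Fsum xi om (g g' : state p) j :
  F xi om g g' j false + F xi om g g' j true =
  if g j != g' j then (xi * om) * a g j else 1 - (xi * om) * a g j.
Proof.
rewrite /F /w /pj /a; case: (g j != g' j); case: (g j); ring.
Qed.

Lemma off_formula (pi : state p -> R) xi om (g g' : state p) :
  (forall g, 0 < pi g) -> 0 < xi -> (forall j, 0 < A j) -> (forall j, 0 < D j) ->
  pARN_off pi xi A D om g g' =
  Num.min 1 (pi g' * \prod_j c xi g g' j / pi g) *
  \prod_j (if g j != g' j then (xi * om) * a g j else 1 - (xi * om) * a g j).
Proof.
move=> hpi hxi hA hD.
have nzj : forall j, pj xi A D j true (g j) != 0.
  move=> j; rewrite pj_true mulf_neq0 ?gt_eqF //; by case: (g j).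
rewrite /pARN_off.
set M := Num.min 1 (pi g' * \prod_j c xi g g' j / pi g).
rewrite (eq_bigr (fun k : state p => M * \prod_j F xi om g g' j (k j))); last first.
  move=> k _.
  rewrite /alphaARN -(mulrA (pi g')) -(mulrA (pi g)) (T_prod _ _ k g g').
  have -> : pRN xi A D k g' * qTHIN om k g' g =
            \prod_j c xi g g' j * \prod_j F xi om g g' j (k j).
    rewrite (T_prod _ _ k g' g) -big_split /=; apply: eq_bigr => j _; exact: F_sym.
  set T := \prod_j F xi om g g' j (k j).
  set C := \prod_j c xi g g' j.
  rewrite mulrC /M; fold C.
  have [->|nzT] := eqVneq T 0; first by rewrite !mulr0.
  congr (Num.min 1 _ * _); field; by rewrite nzT gt_eqF ?hpi.
rewrite -mulr_sumr; congr (_ * _).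
rewrite -bigA_distr_bigA /=; apply: eq_bigr => j _.
by rewrite big_bool /= -Fsum addrC.
Qed.
End Help.

Theorem corollary1 (R : realType) (p : nat) (eps : R)
    (A D : 'I_p -> R) (xi1 om1 xi2 om2 : R) (pi : state p -> R) :
  0 < eps -> eps < 1 / 2 ->
  (forall j, eps < A j < 1 - eps) ->
  (forall j, eps < D j < 1 - eps) ->
  eps < xi1 < 1 - eps -> eps < om1 < 1 - eps ->
  eps < xi2 < 1 - eps -> eps < om2 < 1 - eps ->
  xi1 * om1 = xi2 * om2 ->
  (forall g, 0 < pi g) -> \sum_g pi g = 1 ->
  forall g g' : state p,
    pARN pi xi1 A D om1 g g' = pARN pi xi2 A D om2 g g'.
Proof.
move=> he _ hA hD /andP[hx1 _] _ /andP[hx2 _] _ hxo hpi _.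
have pA : forall j, 0 < A j.
  by move=> j; case/andP: (hA j) => h _; exact: lt_trans h.
have pD : forall j, 0 < D j.
  by move=> j; case/andP: (hD j) => h _; exact: lt_trans h.
have px1 : 0 < xi1 by exact: lt_trans hx1.
have px2 : 0 < xi2 by exact: lt_trans hx2.
have key : forall g g' : state p,
    pARN_off pi xi1 A D om1 g g' = pARN_off pi xi2 A D om2 g g'.
  move=> g g'; rewrite !off_formula // hxo.
  congr (Num.min 1 (_ * _ / _) * _); apply: eq_bigr => j _.
  by apply: c_indep; rewrite ?gt_eqF.
move=> g g'; rewrite /pARN; case: ifP => _; first exact: key.
by congr (1 - _); apply: eq_bigr => h _; exact: key.
Qed.
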